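(* Let $n=(2k+1)^2$ be an odd square ($k\geq 0$ an integer). (i) There exists a graph $H_1$ of order $n$ such that $\chi_{\mathrm{so}}(H_1)=\sqrt{n}$ and $\chi_{\mathrm{so}}(\overline{H_1})=\sqrt{n}$. (ii) There exists a graph $H_2$ of order $n$ such that $\chi_{\mathrm{so}}(H_2)=n$ and $\chi_{\mathrm{so}}(\overline{H_2})=n$. (iii) For every graph $G$ on $n$ vertices, $2\sqrt{n}\leq \chi_{\mathrm{so}}(G)+\chi_{\mathrm{so}}(\overline{G})\leq 2n$ and $n\leq \chi_{\mathrm{so}}(G)\cdot\chi_{\mathrm{so}}(\overline{G})\leq n^2$, and all four of these inequalities are attained with equality by some graph on $n$ vertices.
   Context: All graphs are finite, simple and undirected; $\overline{G}$ denotes the complement of $G$. A strong odd coloring of a graph $G$ is a proper vertex coloring of $G$ such that for every non-isolated vertex $v$ and every color $c$, either no vertex of the open neighborhood $N_G(v)$ has color $c$, or color $c$ is used on an odd number of vertices of $N_G(v)$; $\chi_{\mathrm{so}}(G)$ is the minimum number of colors in such a coloring. *)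

(* Defs.v *)
From mathcomp Require Import all_boot.
Set Implicit Arguments. Unset Strict Implicit. Unset Printing Implicit Defensive.

Record sgraph (n : nat) := SGraph {
  adj : rel 'I_n;
  adj_sym : symmetric adj;
  adj_irr : irreflexive adj }.

Definition compl_adj n (G : sgraph n) : rel 'I_n :=
  fun u v => (u != v) && ~~ adj G u v.

Lemma compl_sym n (G : sgraph n) : symmetric (compl_adj G).
Proof. by move=> u v; rewrite /compl_adj eq_sym adj_sym. Qed.

Lemma compl_irr n (G : sgraph n) : irreflexive (compl_adj G).
Proof. by move=> u; rewrite /compl_adj eqxx. Qed.

Definition compl n (G : sgraph n) : sgraph n :=
  SGraph (@compl_sym n G) (@compl_irr n G).

Definition is_so_coloring n k (G : sgraph n) (f : 'I_n -> 'I_k) : bool :=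
  [forall u, forall v, adj G u v ==> (f u != f v)] &&
  [forall v, [exists u, adj G v u] ==>
     [forall c : 'I_k,
        (#|[set u | adj G v u & f u == c]| == 0)
        || odd #|[set u | adj G v u & f u == c]| ]].

Definition so_colorable n (G : sgraph n) (k : nat) : bool :=
  [exists f : {ffun 'I_n -> 'I_k}, is_so_coloring G f].

Lemma so_colorable_exists n (G : sgraph n) : exists k, so_colorable G k.
Proof.
exists n; apply/existsP; exists [ffun v => v]; apply/andP; split.
  apply/forallP=> u; apply/forallP=> v; apply/implyP=> huv; rewrite !ffunE.
  by apply: contraTneq huv => ->; rewrite adj_irr.
apply/forallP=> v; apply/implyP=> _; apply/forallP=> c.
have : #|[set u | adj G v u & [ffun w => w] u == c]| <= 1.
  rewrite -(cards1 c); apply: subset_leq_card; apply/subsetP=> u.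
  by rewrite !inE ffunE => /andP[_ ->].
by case: #|_| => [|[|]].
Qed.

Definition chi_so n (G : sgraph n) : nat := ex_minn (so_colorable_exists G).

(* Main.v *)
Require Import Defs.
From mathcomp Require Import all_boot.
From mathcomp Require Import zify.
Set Implicit Arguments. Unset Strict Implicit. Unset Printing Implicit Defensive.

Lemma chi_so_le N (G : sgraph N) k : so_colorable G k -> chi_so G <= k.
Proof. rewrite /chi_so; case: ex_minnP => a _ H; exact: H. Qed.

Lemma chi_so_col N (G : sgraph N) : so_colorable G (chi_so G).
Proof. by rewrite /chi_so; case: ex_minnP. Qed.

Lemma so_col_N n (G : sgraph n) : so_colorable G n.
Proof.
apply/existsP; exists [ffun v => v]; apply/andP; split.
  apply/forallP=> u; apply/forallP=> v; apply/implyP=> huv; rewrite !ffunE.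
  by apply: contraTneq huv => ->; rewrite adj_irr.
apply/forallP=> v; apply/implyP=> _; apply/forallP=> c.
have : #|[set u | adj G v u & [ffun w => w] u == c]| <= 1.
  rewrite -(cards1 c); apply: subset_leq_card; apply/subsetP=> u.
  by rewrite !inE ffunE => /andP[_ ->].
by case: #|_| => [|[|]].
Qed.

Lemma NG_prod N (G : sgraph N) a b :
  so_colorable G a -> so_colorable (compl G) b -> N <= a * b.
Proof.
move=> /existsP[f /andP[/forallP pf _]] /existsP[g /andP[/forallP pg _]].
have inj : injective (fun x => (f x, g x)).
  move=> x y [fxy gxy]; apply/eqP; apply/negPn/negP => nxy.
  case Hxy: (adj G x y).
    by move: (pf x) => /forallP/(_ y); rewrite Hxy fxy eqxx.
  by move: (pg x) => /forallP/(_ y); rewrite /= /compl_adj nxy Hxy gxy eqxx.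
by have := leq_card _ inj; rewrite card_prod !card_ord.
Qed.

Lemma chi_eq_N N (G : sgraph N) :
  (forall k (f : 'I_N -> 'I_k), is_so_coloring G f -> injective f) -> chi_so G = N.
Proof.
move=> H; apply/eqP; rewrite eqn_leq chi_so_le ?so_col_N //=.
have /existsP[f hf] := chi_so_col G.
by have := leq_card _ (H _ _ hf); rewrite !card_ord.
Qed.

Record grid (N m : nat) := Grid {
  gp : 'I_N -> 'I_m; gq : 'I_N -> 'I_m; gmk : 'I_m -> 'I_m -> 'I_N;
  gp_mk : forall i j, gp (gmk i j) = i;
  gq_mk : forall i j, gq (gmk i j) = j;
  gmk_pq : forall x, gmk (gp x) (gq x) = x }.

Definition gswap N m (g : grid N m) : grid N m :=
  @Grid N m (gq g) (gp g) (fun i j => gmk g j i)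
    (fun i j => gq_mk g j i) (fun i j => gp_mk g j i) (gmk_pq g).

Lemma geq N m (g : grid N m) x y : gp g x = gp g y -> gq g x = gq g y -> x = y.
Proof. by move=> hp hq; rewrite -(gmk_pq g x) -(gmk_pq g y) hp hq. Qed.

Lemma card_row N m (g : grid N m) a : #|[set x | gp g x == a]| = m.
Proof.
have -> : [set x | gp g x == a] = gmk g a @: [set: 'I_m].
  apply/setP=> x; rewrite inE; apply/eqP/imsetP => [<-|[j _ ->]].
    by exists (gq g x); rewrite ?inE ?gmk_pq.
  by rewrite gp_mk.
rewrite card_imset ?cardsT ?card_ord // => i j /(congr1 (gq g)).
by rewrite !gq_mk.
Qed.


Definition h1_adj N m (g : grid N m) : rel 'I_N :=
  fun x y => (x != y) && (gp g x == gp g y).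
Lemma h1_sym N m (g : grid N m) : symmetric (h1_adj g).
Proof. by move=> x y; rewrite /h1_adj eq_sym (eq_sym (gp g x)). Qed.
Lemma h1_irr N m (g : grid N m) : irreflexive (h1_adj g).
Proof. by move=> x; rewrite /h1_adj eqxx. Qed.
Definition H1 N m (g : grid N m) := SGraph (h1_sym g) (h1_irr g).

Definition rook_adj N m (g : grid N m) : rel 'I_N :=
  fun x y => (x != y) && ((gp g x == gp g y) || (gq g x == gq g y)).
Lemma rook_sym N m (g : grid N m) : symmetric (rook_adj g).
Proof. by move=> x y; rewrite /rook_adj eq_sym (eq_sym (gp g x)) (eq_sym (gq g x)). Qed.
Lemma rook_irr N m (g : grid N m) : irreflexive (rook_adj g).
Proof. by move=> x; rewrite /rook_adj eqxx. Qed.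
Definition Rook N m (g : grid N m) := SGraph (rook_sym g) (rook_irr g).

Lemma h1_col N m (g : grid N m) : so_colorable (H1 g) m.
Proof.
apply/existsP; exists [ffun x => gq g x]; apply/andP; split.
  apply/forallP=> x; apply/forallP=> y; apply/implyP => /andP[nxy /eqP pxy].
  rewrite !ffunE; apply: contra nxy => /eqP qxy; apply/eqP; exact: (geq pxy qxy).
apply/forallP=> v; apply/implyP=> _; apply/forallP=> c.
have : #|[set u | adj (H1 g) v u & [ffun x => gq g x] u == c]| <= 1.
  rewrite -(cards1 (gmk g (gp g v) c)); apply: subset_leq_card; apply/subsetP=> u.
  rewrite !inE ffunE /= /h1_adj => /andP[/andP[_ /eqP pu] /eqP qu].
  by apply/eqP; apply: (geq (g:=g)); rewrite ?gp_mk ?gq_mk.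
by case: #|_| => [|[|]].
Qed.

Lemma h1c_col N m (g : grid N m) : odd m -> so_colorable (compl (H1 g)) m.
Proof.
move=> modd.
apply/existsP; exists [ffun x => gp g x]; apply/andP; split.
  apply/forallP=> x; apply/forallP=> y; apply/implyP.
  by move=> /andP[nxy]; rewrite /H1 /= /h1_adj nxy /= !ffunE.
apply/forallP=> v; apply/implyP=> _; apply/forallP=> c.
case: (eqVneq c (gp g v)) => [->|ncv].
  apply/orP; left; rewrite cards_eq0; apply/eqP/setP => u.
  rewrite !inE ffunE /= /compl_adj /H1 /= /h1_adj (eq_sym (gp g u)).
  by case: (v != u); case: (gp g v == gp g u).
have -> : [set u | adj (compl (H1 g)) v u & [ffun x => gp g x] u == c]
          = [set u | gp g u == c].
  apply/setP=> u; rewrite !inE ffunE /= /compl_adj /H1 /= /h1_adj.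
  case: (eqVneq (gp g u) c) => [pu|]; last by rewrite andbF.
  have nvu : v != u.
    by apply/eqP => vu; move: ncv; rewrite vu pu eqxx.
  by rewrite nvu /= pu eq_sym ncv.
by rewrite card_row modd orbT.
Qed.

Lemma rook_inj N m (g : grid N m) k (f : 'I_N -> 'I_k) :
  is_so_coloring (Rook g) f -> injective f.
Proof.
move=> /andP[/forallP pf /forallP nf] u v fuv; apply/eqP/negPn/negP => nuv.
have nadj : ~~ rook_adj g u v.
  by apply/negP => H; move: (pf u) => /forallP/(_ v); rewrite /= H fuv eqxx.
move: nadj; rewrite /rook_adj nuv /= negb_or => /andP[npuv nquv].
pose w := gmk g (gp g u) (gq g v).
have pw : gp g w = gp g u by rewrite gp_mk.
have qw : gq g w = gq g v by rewrite gq_mk.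
have awu : rook_adj g w u.
  rewrite /rook_adj pw eqxx andbT; apply/eqP => wu.
  by move: nquv; rewrite -qw wu eqxx.
have awv : rook_adj g w v.
  rewrite /rook_adj qw eqxx orbT andbT; apply/eqP => wv.
  by move: npuv; rewrite -pw wv eqxx.
have S : [set x | adj (Rook g) w x & f x == f u] = [set u; v].
  apply/setP => x; rewrite !inE /Rook /=; apply/idP/idP.
    move=> /andP[/andP[nwx /orP[/eqP pwx|/eqP qwx]] fx].
      apply/orP; left; apply/negPn/negP=> nxu.
      move: (pf u)=>/forallP/(_ x).
      by rewrite /Rook /= /rook_adj eq_sym nxu -pwx pw eqxx /= (eqP fx) eqxx.
    apply/orP; right; apply/negPn/negP=> nxv.
    move: (pf v)=>/forallP/(_ x).
    by rewrite /Rook /= /rook_adj eq_sym nxv -qwx qw eqxx orbT /= (eqP fx) fuv eqxx.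
  by case/orP => /eqP ->; [rewrite awu eqxx | rewrite awv fuv eqxx].
have ex : [exists u0, adj (Rook g) w u0] by apply/existsP; exists u.
move: (nf w); rewrite ex /= => /forallP/(_ (f u)).
by rewrite S cards2 nuv.
Qed.


Lemma crook_core N m (g : grid N m) (G : sgraph N) :
  odd m ->
  (forall x y, adj G x y = [&& x != y, gp g x != gp g y & gq g x != gq g y]) ->
  forall k (f : 'I_N -> 'I_k) u v, is_so_coloring G f -> u != v -> f u = f v ->
  gp g u = gp g v -> False.
Proof.
move=> modd hG k f u v /andP[/forallP pf /forallP nf] nuv fuv puv.
have proper x y : f x = f y -> ~~ adj G x y.
  by move=> fxy; apply/negP=> H; move: (pf x) => /forallP/(_ y); rewrite H fxy eqxx.
have quv : gq g u != gq g v.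
  by apply: contra nuv => /eqP q; apply/eqP; exact: (geq puv q).
have Srow x : x \in [set x | f x == f u] -> gp g x = gp g u.
  rewrite inE => /eqP fx; apply/eqP/negPn/negP => nxa.
  have nxu : x != u by apply: contraNneq nxa => ->.
  have nxv : x != v by apply: contraNneq nxa => ->; rewrite puv.
  have h1 := proper x u fx; have h2 := proper x v (etrans fx fuv).
  move: h1 h2; rewrite !hG nxu nxv nxa -puv nxa /= !negbK => /eqP -> /eqP.
  by apply/eqP.
pose a' := if gq g u != gp g u then gq g u else gq g v.
have na' : a' != gp g u.
  by rewrite /a'; case: ifP => // /negbFE /eqP <-; rewrite eq_sym.
have Tw w : gp g w != gp g u ->
    [set x | adj G w x & f x == f u] = [set x in [set x | f x == f u] | gq g x != gq g w].
  move=> nw; apply/setP => x; rewrite !inE hG.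
  case fx: (f x == f u); last by rewrite andbF.
  have px : gp g x = gp g u by apply: Srow; rewrite inE fx.
  have nwx : w != x by apply: contraNneq nw => ->; rewrite px.
  by rewrite px nw nwx andbT /= eq_sym.
pose w1 := gmk g a' (gq g u).
have pw1 : gp g w1 = a' by rewrite gp_mk.
have qw1 : gq g w1 = gq g u by rewrite gq_mk.
have E1 : [set x in [set x | f x == f u] | gq g x != gq g w1] = [set x | f x == f u] :\ u.
  apply/setP=> x; rewrite !inE qw1.
  case fx: (f x == f u); rewrite ?andbF //= andbT.
  have px : gp g x = gp g u by apply: Srow; rewrite inE fx.
  apply/idP/idP; apply: contra => /eqP.
    by move=> ->.
  by move=> qx; apply/eqP; exact: (geq px qx).
have evenS : ~~ odd #|[set x | f x == f u]|.
  have ex : [exists u0, adj G w1 u0].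
    apply/existsP; exists v; rewrite hG pw1 qw1 quv andbT -puv na' andbT.
    by apply: contraNneq na' => wv; rewrite -pw1 wv -puv.
  move: (nf w1); rewrite ex /= => /forallP/(_ (f u)).
  rewrite Tw ?pw1 // E1 (cardsD1 u [set x | f x == f u]) !inE eqxx /=.
  have vin : v \in [set x | f x == f u] :\ u by rewrite !inE eq_sym nuv fuv eqxx.
  have -> : (#|[set x | f x == f u] :\ u| == 0) = false.
    by apply/negbTE; rewrite cards_eq0; apply/set0Pn; exists v.
  by move=> /= ->.
case: (boolP [forall y : 'I_m, gmk g (gp g u) y \in [set x | f x == f u]]).
  move=> /forallP allin.
  have : [set x | f x == f u] = [set x | gp g x == gp g u].
    apply/setP => x; rewrite [in RHS]inE; apply/idP/idP.
      by move=> /Srow ->.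
    by move=> /eqP px; have := allin (gq g x); rewrite -px gmk_pq.
  move=> eS; move: evenS; by rewrite eS card_row modd.
rewrite negb_forall => /existsP[y yn].
pose w2 := gmk g a' y.
have pw2 : gp g w2 = a' by rewrite gp_mk.
have qw2 : gq g w2 = y by rewrite gq_mk.
have E2 : [set x in [set x | f x == f u] | gq g x != gq g w2] = [set x | f x == f u].
  apply/setP=> x; rewrite [in RHS]inE !inE qw2.
  case fx: (f x == f u); rewrite ?andbF //=.
  have px : gp g x = gp g u by apply: Srow; rewrite inE fx.
  apply: contra yn => /eqP qx; rewrite -qx -px gmk_pq inE fx.
  done.
have uS : u \in [set x | f x == f u] by rewrite inE.
have ex : [exists u0, adj G w2 u0].
  apply/existsP; exists u; rewrite hG pw2 qw2 na' /=.
  have nyu : y != gq g u.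
    by apply: contra yn => /eqP ->; rewrite gmk_pq.
  rewrite nyu andbT.
  by apply: contraNneq na' => <-; rewrite pw2.
move: (nf w2); rewrite ex /= => /forallP/(_ (f u)).
rewrite Tw ?pw2 // E2 (negbTE evenS) orbF cards_eq0.
by move=> /eqP e; move: uS; rewrite e inE.
Qed.


Lemma crook_inj N m (g : grid N m) k (f : 'I_N -> 'I_k) :
  odd m -> is_so_coloring (compl (Rook g)) f -> injective f.
Proof.
move=> modd hf u v fuv; apply/eqP/negPn/negP => nuv.
have hG : forall x y, adj (compl (Rook g)) x y =
   [&& x != y, gp g x != gp g y & gq g x != gq g y].
  move=> x y; rewrite /= /compl_adj /Rook /= /rook_adj.
  by case: (x != y); rewrite //= negb_or.
have hG' : forall x y, adj (compl (Rook g)) x y =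
   [&& x != y, gp (gswap g) x != gp (gswap g) y & gq (gswap g) x != gq (gswap g) y].
  move=> x y; rewrite hG /=.
  by case: (x != y); case: (gp g x != gp g y); case: (gq g x != gq g y).
have : ~~ adj (compl (Rook g)) u v.
  apply/negP => H; move: hf => /andP[/forallP pf _].
  by move: (pf u) => /forallP/(_ v); rewrite H fuv eqxx.
rewrite hG nuv /= negb_and !negbK => /orP[/eqP puv|/eqP quv].
  exact: (crook_core modd hG hf nuv fuv puv).
exact: (crook_core (g := gswap g) modd hG' hf nuv fuv quv).
Qed.

Lemma mpos k : 0 < 2 * k + 1.
Proof. by rewrite addn1. Qed.

Lemma div_lt m (x : 'I_(m ^ 2)) : 0 < m -> x %/ m < m.
Proof. by move=> mp; rewrite ltn_divLR // mulnn. Qed.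

Lemma mk_lt m (i j : 'I_m) : i * m + j < m ^ 2.
Proof. have := ltn_ord i; have := ltn_ord j; rewrite expnS expn1; nia. Qed.

Definition cgrid (k : nat) : grid ((2 * k + 1) ^ 2) (2 * k + 1).
Proof.
refine (@Grid _ _ (fun x => Ordinal (div_lt x (mpos k)))
                  (fun x => Ordinal (ltn_pmod x (mpos k)))
                  (fun i j => Ordinal (mk_lt i j)) _ _ _).
- move=> i j; apply: val_inj => /=.
  by rewrite divnMDl ?mpos // divn_small ?addn0.
- move=> i j; apply: val_inj => /=.
  by rewrite modnMDl modn_small.
- move=> x; apply: val_inj => /=.
  by rewrite -divn_eq.
Defined.


Lemma sq4 a b : 4 * (a * b) <= (a + b) * (a + b).
Proof.
wlog ab : a b / a <= b.
  move=> H; case: (leqP a b) => [/H //|/ltnW ba].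
  by rewrite (mulnC a) (addnC a); apply: H.
rewrite -(subnKC ab); move: (b - a) => d; nia.
Qed.
Lemma amgm m a b : m * m <= a * b -> 2 * m <= a + b.
Proof.
move=> h; rewrite leqNgt; apply/negP => hl.
have h1 := sq4 a b.
have h2 : (a + b) * (a + b) < (2 * m) * (2 * m) by apply: ltn_mul.
nia.
Qed.

Theorem theorem4p6 (k : nat) :
  let n := (2 * k + 1) ^ 2 in
  (* (i) *)
  (exists H1 : sgraph n,
      chi_so H1 = 2 * k + 1 /\ chi_so (compl H1) = 2 * k + 1) /\
  (* (ii) *)
  (exists H2 : sgraph n, chi_so H2 = n /\ chi_so (compl H2) = n) /\
  (* (iii) bounds *)
  (forall G : sgraph n,
      2 * (2 * k + 1) <= chi_so G + chi_so (compl G) <= 2 * n /\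
      n <= chi_so G * chi_so (compl G) <= n ^ 2) /\
  (* (iii) each bound is attained *)
  (exists G : sgraph n, chi_so G + chi_so (compl G) = 2 * (2 * k + 1)) /\
  (exists G : sgraph n, chi_so G + chi_so (compl G) = 2 * n) /\
  (exists G : sgraph n, chi_so G * chi_so (compl G) = n) /\
  (exists G : sgraph n, chi_so G * chi_so (compl G) = n ^ 2).
Proof.
move=> n.
have modd : odd (2 * k + 1) by rewrite oddD oddM.
have lo : forall G : sgraph n, n <= chi_so G * chi_so (compl G).
  by move=> G; apply: NG_prod; apply: chi_so_col.
have up : forall G : sgraph n, chi_so G <= n.
  by move=> G; apply: chi_so_le; apply: so_col_N.
pose g := cgrid k.
have h1 : chi_so (H1 g) = 2 * k + 1 /\ chi_so (compl (H1 g)) = 2 * k + 1.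
  have a1 := chi_so_le (h1_col g).
  have a2 := chi_so_le (h1c_col g modd).
  have := lo (H1 g); rewrite /n.
  move: a1 a2; set a := chi_so _; set b := chi_so _ => a1 a2 ab.
  split; nia.
have h2 : chi_so (Rook g) = n /\ chi_so (compl (Rook g)) = n.
  split; apply: chi_eq_N => k' f hf.
    exact: rook_inj hf.
  exact: crook_inj modd hf.
split; first by exists (H1 g).
split; first by exists (Rook g).
split.
  move=> G; have := lo G; have := up G; have := up (compl G); rewrite /n.
  move: (chi_so G) (chi_so (compl G)) => a b ha hb hab.
  have e : (2 * k + 1) ^ 2 = (2 * k + 1) * (2 * k + 1) by rewrite mulnn.
  rewrite e in ha hb hab *.
  split; apply/andP; split; first exact: amgm.
  - by rewrite mul2n -addnn leq_add.
  - done.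
  - by rewrite -mulnn leq_mul.
split; first by exists (H1 g); case: h1 => -> ->; lia.
split; first by exists (Rook g); case: h2 => -> ->; lia.
split; first by exists (H1 g); case: h1 => -> ->; rewrite /n; lia.
by exists (Rook g); case: h2 => -> ->; rewrite /n; lia.
Qed.
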